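(* Let $G$ be an $r$-graph that maximises the Lagrangian among $r$-graphs with the same number of edges, and suppose that $w$ is a maximal weighting of $G$ which is decreasing and which satisfies $w(x) > 0$ for every $x \in V(G)$. Then $G$ is left-compressed.
   Context: An $r$-graph is a finite family $G$ of $r$-element subsets of $\mathbb{N}$; $V(G)$ is the set of elements lying in some edge. A weighting of $\mathbb{N}$ is $w:\mathbb{N}\to[0,\infty)$ with $\sum_x w(x)=1$; $w(G)=\sum_{e\in G}\prod_{x\in e}w(x)$; the Lagrangian is $\lambda(G)=\max_w w(G)$, and $w$ is maximal for $G$ if $w(G)=\lambda(G)$. A weighting is decreasing if $w(i)\ge w(j)$ whenever $i<j$. For $x<y$ and an $r$-set $F$, the $xy$-compression is $C_{xy}(F)=(F\setminus\{y\})\cup\{x\}$ if $x\notin F$, $y\in F$, and $C_{xy}(F)=F$ otherwise; for a family $\mathcal F$, $C_{xy}(\mathcal F)=\{C_{xy}(F):F\in\mathcal F\}\cup\{F\in\mathcal F: C_{xy}(F)\in\mathcal F\}$. $\mathcal F$ is left-compressed if $C_{xy}(\mathcal F)=\mathcal F$ for all $x<y$. *)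

(* Defs.v *)
From HB Require Import structures.
From mathcomp Require Import all_boot all_order all_algebra.
From mathcomp Require Import finmap.
From mathcomp Require Import all_classical all_reals all_analysis.
Set Implicit Arguments. Unset Strict Implicit. Unset Printing Implicit Defensive.
Import Order.TTheory GRing.Theory Num.Theory.
Import numFieldNormedType.Exports.
Local Open Scope ring_scope.
Local Open Scope classical_set_scope.

Definition rgraph (r : nat) (G : {fset {fset nat}}) : Prop :=
  forall e, e \in G -> #|` e|%fset = r.

Definition weighting {R : realType} (w : nat -> R) : Prop :=
  (forall x, 0 <= w x) /\ series w n @[n --> \oo] --> (1 : R).

Definition wG {R : realType} (w : nat -> R) (G : {fset {fset nat}}) : R :=
  \sum_(e <- G) \prod_(x <- e) w x.

Definition lagrangian {R : realType} (G : {fset {fset nat}}) : R :=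
  sup [set wG w G | w in (@weighting R)].

Definition maximal_weighting {R : realType} (G : {fset {fset nat}}) (w : nat -> R) : Prop :=
  weighting w /\ wG w G = lagrangian G.

Definition decreasing_weighting {R : realType} (w : nat -> R) : Prop :=
  forall i j : nat, (i < j)%N -> w j <= w i.

Definition in_V (G : {fset {fset nat}}) (x : nat) : Prop :=
  exists2 e, e \in G & x \in e.

Definition compr (x y : nat) (F : {fset nat}) : {fset nat} :=
  if (x \notin F) && (y \in F) then fsetU (fsetD F (fset1 y)) (fset1 x) else F.

Definition comprF (x y : nat) (G : {fset {fset nat}}) : {fset {fset nat}} :=
  fsetU [fset compr x y F | F in G]%fset [fset F in G | compr x y F \in G]%fset.

Definition left_compressed (G : {fset {fset nat}}) : Prop :=
  forall x y : nat, (x < y)%N -> comprF x y G = G.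

Definition max_lagrangian_rgraph {R : realType} (r : nat) (G : {fset {fset nat}}) : Prop :=
  rgraph r G /\
  forall H, rgraph r H -> #|` H|%fset = #|` G|%fset -> @lagrangian R H <= @lagrangian R G.

(* Main.v *)
Require Import Defs.
From HB Require Import structures.
From mathcomp Require Import all_boot all_order all_algebra.
From mathcomp Require Import finmap.
From mathcomp Require Import all_classical all_reals all_analysis.
From mathcomp Require Import ring lra.
Import Order.TTheory GRing.Theory Num.Theory.
Import numFieldNormedType.Exports.
Local Open Scope ring_scope.

Section H.
Variable R : realType.

Lemma series_ge0 (w : nat -> R) n : (forall x, 0 <= w x) -> 0 <= series w n.
Proof. move=> H; rewrite /series /=; exact: sumr_ge0. Qed.

Lemma w_le1 (w : nat -> R) : weighting w -> forall v, w v <= 1.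
Proof.
move=> [H0 Hc] v.
have Hnd : {homo series w : n m / (n <= m)%N >-> n <= m}.
  move=> n m nm; rewrite /series /=; apply: (nondecreasing_series (P:=predT)) => //.
have : series w v.+1 <= limn (series w).
  exact: (nondecreasing_cvgn_le Hnd (cvgP _ Hc)).
rewrite (cvg_lim _ Hc) // seriesS => Hle.
apply: le_trans Hle; rewrite lerDl; exact: series_ge0.
Qed.

Lemma lag_ub (w : nat -> R) H : weighting w -> wG w H <= lagrangian H.
Proof.
move=> Hw; apply: ub_le_sup; last by exists w.
exists (\sum_(e <- H) (1:R)) => _ [u Hu <-].
rewrite /wG; apply: ler_sum => e _; apply: prodr_ile1 => v _.
by rewrite (w_le1 _ Hu) andbT; case: Hu.
Qed.

Definition shift (w : nat -> R) (x y : nat) (t : R) : nat -> R :=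
  fun v => w v + t * (v == x)%:R - t * (v == y)%:R.

Lemma sum_ind n x : (x < n)%N -> \sum_(0 <= k < n) ((k == x)%:R : R) = 1.
Proof.
move=> Hx; rewrite (bigD1_seq x) /= ?mem_index_iota ?iota_uniq // eqxx big1 ?addr0 //.
by move=> k /negPf ->.
Qed.

Lemma shift_weighting (w : nat -> R) x y t : weighting w -> x != y ->
  0 <= w x + t -> 0 <= w y - t -> weighting (shift w x y t).
Proof.
move=> [H0 Hc] Hxy Hx Hy; split.
  move=> v; rewrite /shift; case: (eqVneq v x) => [->|vx].
    by rewrite (negPf Hxy) mulr1 mulr0 subr0.
  case: (eqVneq v y) => [->|vy]; first by rewrite mulr0 addr0 mulr1.
  by rewrite !mulr0 addr0 subr0.
apply: cvg_trans Hc; apply: near_eq_cvg; near=> n.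
have Hn : (maxn x y < n)%N by near: n; exists (maxn x y).+1.
rewrite /series /= /shift sumrB big_split /= -!mulr_sumr !sum_ind ?addrK //.
  by apply: leq_ltn_trans Hn; rewrite leq_maxr.
by apply: leq_ltn_trans Hn; rewrite leq_maxl.
Unshelve. all: by end_near.
Qed.



Lemma fsetD1_notin (A : {fset nat}) a : a \notin A -> (A `\ a)%fset = A.
Proof. by move=> H; apply/fsetP=> z; rewrite !inE; case: eqP => // ->; rewrite (negPf H). Qed.

Lemma prod_split (f : nat -> R) x y (F : {fset nat}) : x != y ->
  \prod_(v <- F) f v = (if x \in F then f x else 1) * (if y \in F then f y else 1)
     * \prod_(v <- (F `\ x `\ y)%fset) f v.
Proof.
move=> Hxy.
have HyF : (y \in (F `\ x)%fset) = (y \in F) by rewrite !inE eq_sym Hxy.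
case: (boolP (x \in F)) => Hx.
  rewrite (big_fsetD1 x Hx) -mulrA; congr (_ * _).
  case: (boolP (y \in F)) => Hy.
    by rewrite (big_fsetD1 y (A:=(F `\ x)%fset)) ?HyF.
  by rewrite mul1r (@fsetD1_notin (F `\ x)%fset y) ?HyF.
rewrite mul1r (@fsetD1_notin F x Hx).
case: (boolP (y \in F)) => Hy.
  by rewrite (big_fsetD1 y Hy).
by rewrite mul1r fsetD1_notin.
Qed.

Lemma shift_x (w : nat -> R) x y t : x != y -> shift w x y t x = w x + t.
Proof. by move=> H; rewrite /shift eqxx (negPf H) mulr1 mulr0 subr0. Qed.
Lemma shift_y (w : nat -> R) x y t : x != y -> shift w x y t y = w y - t.
Proof. by move=> H; rewrite /shift eqxx eq_sym (negPf H) mulr1 mulr0 addr0. Qed.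
Lemma shift_o (w : nat -> R) x y t v : v != x -> v != y -> shift w x y t v = w v.
Proof. by move=> H1 H2; rewrite /shift (negPf H1) (negPf H2) !mulr0 addr0 subr0. Qed.

Lemma prod_rest (w : nat -> R) x y t (F : {fset nat}) :
  \prod_(v <- (F `\ x `\ y)%fset) shift w x y t v = \prod_(v <- (F `\ x `\ y)%fset) w v.
Proof.
rewrite big_seq [RHS]big_seq; apply: eq_bigr => v; rewrite !inE => /and3P [H1 H2 _].
exact: shift_o.
Qed.

Lemma edge_ineq (w : nat -> R) x y t (F : {fset nat}) : x != y -> (forall v, 0 <= w v) ->
  - (2 * t ^+ 2) * \prod_(v <- (F `\ x `\ y)%fset) w v <=
  \prod_(v <- F) shift w x y t v + \prod_(v <- F) shift w x y (-t) v - 2 * \prod_(v <- F) w v.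
Proof.
move=> Hxy H0.
rewrite (prod_split (shift w x y t) x y F Hxy) (prod_split (shift w x y (-t)) x y F Hxy) (prod_split w x y F Hxy) !prod_rest !shift_x // !shift_y //.
have : 0 <= \prod_(v <- (F `\ x `\ y)%fset) w v by apply: prodr_ge0.
move: (\prod_(v <- (F `\ x `\ y)%fset) w v) => a Ha.
have H2 : 0 <= 2 * t ^+ 2 * a by rewrite mulr_ge0 // mulr_ge0 // sqr_ge0.
case: (x \in F); case: (y \in F).
- by rewrite le_eqVlt; apply/orP; left; apply/eqP; ring.
- by rewrite mulNr (_ : _ + _ - _ = 0) ?oppr_le0 //; ring.
- by rewrite mulNr (_ : _ + _ - _ = 0) ?oppr_le0 //; ring.
- by rewrite mulNr (_ : _ + _ - _ = 0) ?oppr_le0 //; ring.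
Qed.

End H.
Arguments shift {R}.

Theorem lemma3p5 (R : realType) (r : nat) (G : {fset {fset nat}}) (w : nat -> R) :
  @max_lagrangian_rgraph R r G ->
  maximal_weighting G w ->
  decreasing_weighting w ->
  (forall x, in_V G x -> 0 < w x) ->
  left_compressed G.
Proof.
move=> [Hrg Hmax] [Hw HwG] Hdec Hpos x y Hxy.
have Hxy' : x != y by rewrite neq_ltn Hxy.
have H0 : forall v, 0 <= w v by case: Hw.
have key : forall F, F \in G -> y \in F -> x \notin F -> compr x y F \in G.
  move=> F0 HF0 HyF HxF; apply/negPn/negP => HC.
  set F1 := (x |` (F0 `\ y))%fset.
  have HF1 : compr x y F0 = F1 by rewrite /compr HxF HyF /= fsetUC.
  rewrite HF1 in HC.
  have HxF1 : x \notin (F0 `\ y)%fset by rewrite inE (negPf HxF) andbF.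
  set H' := (F1 |` (G `\ F0))%fset.
  have HF1H : F1 \notin (G `\ F0)%fset by rewrite inE (negPf HC) andbF.
  have Hrg' : Defs.rgraph r H'.
    move=> e; rewrite !inE => /orP[/eqP->|/andP[_ /Hrg]] //.
    rewrite cardfsU1 HxF1 -(Hrg _ HF0) [in RHS](cardfsD1 y F0) HyF //.
  have Hcard : #|` H'|%fset = #|` G|%fset.
    by rewrite cardfsU1 HF1H [in RHS](cardfsD1 F0 G) HF0.
  have Hlag := Hmax H' Hrg' Hcard.
  have Hwy : 0 < w y by apply: Hpos; exists F0.
  have Hwxy : w y <= w x by apply: Hdec.
  set Q := \prod_(v <- (F0 `\ y)%fset) w v.
  have HQ : 0 < Q.
    rewrite /Q big_seq; apply: prodr_gt0 => v; rewrite inE => /andP[_ Hv].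
    by apply: Hpos; exists F0.
  set B := \sum_(F <- G) \prod_(v <- (F `\ x `\ y)%fset) w v.
  have HB : 0 <= B by apply: sumr_ge0 => F _; apply: prodr_ge0.
  have claim : forall t, 0 < t -> t <= w y -> Q <= t * B.
    move=> t Ht Hty.
    have W1 : weighting (shift w x y t).
      by apply: shift_weighting => //; lra.
    have W2 : weighting (shift w x y (-t)).
      by apply: shift_weighting => //; lra.
    have Ha : wG (shift w x y t) H' <= wG w G.
      by rewrite HwG; apply: le_trans Hlag; apply: lag_ub.
    have Hb : wG (shift w x y (-t)) G <= wG w G.
      by rewrite HwG; apply: lag_ub.
    have Hc : \sum_(F <- G) (-(2*t^+2) * \prod_(v <- (F `\ x `\ y)%fset) w v) <=
      \sum_(F <- G) (\prod_(v <- F) shift w x y t v + \prod_(v <- F) shift w x y (-t) v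
          - 2 * \prod_(v <- F) w v).
      by apply: ler_sum => F _; apply: edge_ineq.
    rewrite -mulr_sumr sumrB big_split /= -mulr_sumr -/B in Hc.
    have Hd : wG (shift w x y t) H' = wG (shift w x y t) G + Q * (w x - w y + 2 * t).
      rewrite /wG big_fsetU1 // (big_fsetD1 F0 HF0) /= big_fsetU1 // shift_x //.
      rewrite (big_fsetD1 y HyF) /= shift_y //.
      have -> : \prod_(v <- (F0 `\ y)%fset) shift w x y t v = Q.
        rewrite /Q big_seq [RHS]big_seq; apply: eq_bigr => v; rewrite !inE => /andP[vy vF].
        by apply: shift_o => //; apply/eqP => vx; move: HxF; rewrite -vx vF.
      ring.
    have h1 : 0 <= Q * (w x - w y) by apply: mulr_ge0; lra.
    rewrite /wG in Ha Hb Hd.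
    suff : Q * t <= t * B * t by rewrite ler_pM2r.
    nra.
  pose t := Num.min (w y) (Q / (2 * (B + 1))).
  have Ht : 0 < t by rewrite lt_min Hwy /= divr_gt0 //; lra.
  have Ht1 : t <= w y by rewrite ge_min lexx.
  have Ht2 : t * (2 * (B + 1)) <= Q by rewrite -ler_pdivlMr ?ge_min ?lexx ?orbT //; lra.
  have := claim t Ht Ht1.
  nra.
have cin : forall F, F \in G -> compr x y F \in G.
  move=> F HF; rewrite /compr; case: ifP => // /andP[Hx Hy].
  by have := key F HF Hy Hx; rewrite /compr Hx Hy.
apply/fsetP => F; rewrite /comprF in_fsetU; apply/idP/idP.
  case/orP; first by case/imfsetP => F2 /= HF2 ->; apply: cin.
  by rewrite !inE => /andP[].
move=> HF; apply/orP; right; by rewrite !inE HF cin.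
Qed.
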